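(* Let $\alpha\ge1$, let $B\le B_a$ be positive integers, let $\ell$ and $I$ be integers with $0\le\ell\le B_a$ and $I\ge \ell$, and let $(w_k)_{k\le I}$ be real numbers with $w_k=0$ for $k\le 0$ and $0\le w_1\le w_2\le\cdots\le w_I$. For $0\le j\le I$ let $$\beta^{(j)}:=c\sum_{i=1}^{B_a}w_{j-B_a+i}\,E^{\alpha(B_a-i)/B_a},$$ and define $$\mathrm{PRD}_a:=\frac{1}{\alpha_B}\sum_{i=1}^{I-\ell}\left(w_i-\beta^{(i-1)}\right)+\sum_{i=I-\ell+1}^{I}w_i+(B_a-\ell)\beta^{(I)}.$$ Then $$\mathrm{PRD}_a\le\sum_{i=I-B_a+1}^{I-\ell}\phi_i w_i+\sum_{i=I-\ell+1}^{I}\psi_i w_i+w_{I-B_a}\,\Omega,$$ where $$\phi_i:=(B_a-\ell)\,c\,E^{\alpha(I-i)/B_a}+\frac{1}{\alpha_B}\cdot\frac{E^{\alpha}-E^{\alpha(I-\ell-i)/B_a}}{E^{\alpha}-1},\qquad \psi_i:=1+(B_a-\ell)\,c\,E^{\alpha(I-i)/B_a},$$ $$\Omega:=\frac{1}{\alpha_B}\cdot\frac{1}{E^{\alpha}-1}\left(\ell E^{\alpha}-\frac{E^{\alpha}-E^{\alpha(B_a-\ell)/B_a}}{E^{\alpha/B_a}-1}\right).$$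
   Context: Notation: $E:=(1+1/B_a)^{B_a}$, $c:=\frac{E^{\alpha/B_a}-1}{E^{\alpha}-1}$, $e_B:=(1+1/B)^B$ and $\alpha_B:=B(e_B^{\alpha/B}-1)$. *)

(* Defs.v *)
From Stdlib Require Import Reals ZArith List Lra Lia.
Open Scope R_scope.

(* Sum of f k for integer k with a <= k <= b (empty if b < a). *)
Definition Zsum (a b : Z) (f : Z -> R) : R :=
  fold_right Rplus 0
    (map (fun n : nat => f (a + Z.of_nat n)%Z) (seq 0 (Z.to_nat (b - a + 1)))).

Definition Ebig (Ba : nat) : R := (1 + 1 / INR Ba) ^ Ba.

Definition cconst (alpha : R) (Ba : nat) : R :=
  (Rpower (Ebig Ba) (alpha / INR Ba) - 1) / (Rpower (Ebig Ba) alpha - 1).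

Definition eB (B : nat) : R := (1 + 1 / INR B) ^ B.

Definition alphaB (alpha : R) (B : nat) : R :=
  INR B * (Rpower (eB B) (alpha / INR B) - 1).

Definition beta (alpha : R) (Ba : nat) (w : Z -> R) (j : Z) : R :=
  cconst alpha Ba *
  Zsum 1 (Z.of_nat Ba) (fun i =>
    w (j - Z.of_nat Ba + i)%Z *
    Rpower (Ebig Ba) (alpha * (INR Ba - IZR i) / INR Ba)).

Definition PRDa (alpha : R) (B Ba l : nat) (I : Z) (w : Z -> R) : R :=
  / alphaB alpha B *
    Zsum 1 (I - Z.of_nat l) (fun i => w i - beta alpha Ba w (i - 1)%Z)
  + Zsum (I - Z.of_nat l + 1) I w
  + (INR Ba - INR l) * beta alpha Ba w I.

Definition phi (alpha : R) (B Ba l : nat) (I i : Z) : R :=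
  (INR Ba - INR l) * cconst alpha Ba *
    Rpower (Ebig Ba) (alpha * IZR (I - i) / INR Ba)
  + / alphaB alpha B *
    ((Rpower (Ebig Ba) alpha
      - Rpower (Ebig Ba) (alpha * IZR (I - Z.of_nat l - i) / INR Ba))
     / (Rpower (Ebig Ba) alpha - 1)).

Definition psi (alpha : R) (Ba l : nat) (I i : Z) : R :=
  1 + (INR Ba - INR l) * cconst alpha Ba *
    Rpower (Ebig Ba) (alpha * IZR (I - i) / INR Ba).

Definition Omega (alpha : R) (B Ba l : nat) : R :=
  / alphaB alpha B * / (Rpower (Ebig Ba) alpha - 1) *
  (INR l * Rpower (Ebig Ba) alpha
   - (Rpower (Ebig Ba) alpha
      - Rpower (Ebig Ba) (alpha * (INR Ba - INR l) / INR Ba))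
     / (Rpower (Ebig Ba) (alpha / INR Ba) - 1)).

(* Main.v *)
Require Import Defs.
From Stdlib Require Import Reals ZArith List Lra Lia.
Open Scope R_scope.

Definition sumn (n : nat) (g : nat -> R) : R := fold_right Rplus 0 (map g (seq 0 n)).

Lemma fold_Rplus_acc (l : list R) (x : R) :
  fold_right Rplus x l = fold_right Rplus 0 l + x.
Proof. induction l as [|a l IH]; simpl; [lra | rewrite IH; lra]. Qed.

Lemma sumn_S n g : sumn (S n) g = sumn n g + g n.
Proof.
  unfold sumn. rewrite seq_S, map_app, fold_right_app. simpl.
  rewrite fold_Rplus_acc. lra.
Qed.

Lemma sumn_0 g : sumn 0 g = 0.
Proof. reflexivity. Qed.

Lemma sumn_ext n f g : (forall k, (k < n)%nat -> f k = g k) -> sumn n f = sumn n g.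
Proof.
  induction n as [|n IH]; intros H; [reflexivity|].
  rewrite !sumn_S, IH by (intros; apply H; lia). rewrite H by lia. reflexivity.
Qed.

Lemma sumn_zero n g : (forall k, (k < n)%nat -> g k = 0) -> sumn n g = 0.
Proof.
  induction n as [|n IH]; intros H; [reflexivity|].
  rewrite sumn_S, IH by (intros; apply H; lia). rewrite H by lia. lra.
Qed.

Lemma sumn_plus n f g : sumn n (fun k => f k + g k) = sumn n f + sumn n g.
Proof. induction n as [|n IH]; [rewrite ?sumn_0; lra|]. rewrite !sumn_S, IH. lra. Qed.

Lemma sumn_minus n f g : sumn n (fun k => f k - g k) = sumn n f - sumn n g.
Proof. induction n as [|n IH]; [rewrite ?sumn_0; lra|]. rewrite !sumn_S, IH. lra. Qed.

Lemma sumn_scal n a f : sumn n (fun k => a * f k) = a * sumn n f.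
Proof. induction n as [|n IH]; [rewrite ?sumn_0; lra|]. rewrite !sumn_S, IH. lra. Qed.

Lemma sumn_const n a : sumn n (fun _ => a) = INR n * a.
Proof. induction n as [|n IH]; [rewrite sumn_0; simpl; lra|]. rewrite !sumn_S, IH, S_INR. lra. Qed.

Lemma sumn_le n f g : (forall k, (k < n)%nat -> f k <= g k) -> sumn n f <= sumn n g.
Proof.
  induction n as [|n IH]; intros H; [rewrite ?sumn_0; lra|].
  rewrite !sumn_S. assert (H1 := H n ltac:(lia)).
  assert (sumn n f <= sumn n g) by (apply IH; intros; apply H; lia). lra.
Qed.

Lemma sumn_add n m g : sumn (n + m) g = sumn n g + sumn m (fun k => g (n + k)%nat).
Proof.
  induction m as [|m IH]; [rewrite Nat.add_0_r, sumn_0; lra|].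
  rewrite Nat.add_succ_r, !sumn_S, IH. lra.
Qed.

Lemma sumn_split n m g : (m <= n)%nat ->
  sumn n g = sumn m g + sumn (n - m) (fun k => g (m + k)%nat).
Proof.
  intros H. remember (n - m)%nat as d. assert (n = m + d)%nat by lia. subst n.
  apply sumn_add.
Qed.

Lemma sumn_shift m g : sumn m (fun k => g (S k)) = sumn m g + g m - g 0%nat.
Proof.
  induction m as [|m IH]; [rewrite ?sumn_0; lra|]. rewrite !sumn_S, IH. lra.
Qed.

Lemma Zsum_sumn a b f :
  Zsum a b f = sumn (Z.to_nat (b - a + 1)) (fun n => f (a + Z.of_nat n)%Z).
Proof. reflexivity. Qed.

Definition PP (alpha : R) (Ba : nat) (x : R) := Rpower (Ebig Ba) (alpha * x / INR Ba).
Lemma INR_pos Ba : (1 <= Ba)%nat -> 0 < INR Ba.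
Proof. intros; apply lt_0_INR; lia. Qed.

Lemma Ebig_gt1 Ba : (1 <= Ba)%nat -> 1 < Ebig Ba.
Proof.
  intros H. unfold Ebig. apply Rlt_pow_R1; [|lia].
  assert (0 < / INR Ba) by (apply Rinv_0_lt_compat, INR_pos; auto).
  unfold Rdiv. lra.
Qed.

Lemma PP_plus alpha Ba x y : (1 <= Ba)%nat -> PP alpha Ba (x + y) = PP alpha Ba x * PP alpha Ba y.
Proof.
  intros H. unfold PP. rewrite <- Rpower_plus. f_equal.
  assert (INR Ba <> 0) by (apply Rgt_not_eq, INR_pos; auto). field; auto.
Qed.

Lemma PP_Ba alpha Ba : (1 <= Ba)%nat -> PP alpha Ba (INR Ba) = Rpower (Ebig Ba) alpha.
Proof.
  intros H. unfold PP. f_equal.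
  assert (INR Ba <> 0) by (apply Rgt_not_eq, INR_pos; auto). field; auto.
Qed.

Lemma PP_0 alpha Ba : (1 <= Ba)%nat -> PP alpha Ba 0 = 1.
Proof.
  intros H. unfold PP. replace (alpha * 0 / INR Ba) with 0 by (unfold Rdiv; ring).
  apply Rpower_O. pose proof (Ebig_gt1 Ba H); lra.
Qed.

Lemma PP_1 alpha Ba : PP alpha Ba 1 = Rpower (Ebig Ba) (alpha / INR Ba).
Proof. unfold PP. f_equal. unfold Rdiv; ring. Qed.

Lemma PP_mono alpha Ba x y : (1 <= Ba)%nat -> 0 < alpha -> x <= y -> PP alpha Ba x <= PP alpha Ba y.
Proof.
  intros H Ha Hxy. unfold PP. apply Rle_Rpower; [pose proof (Ebig_gt1 Ba H); lra|].
  unfold Rdiv. apply Rmult_le_compat_r; [left; apply Rinv_0_lt_compat, INR_pos; auto|].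
  apply Rmult_le_compat_l; lra.
Qed.

Lemma Q_gt1 alpha Ba : (1 <= Ba)%nat -> 0 < alpha -> 1 < Rpower (Ebig Ba) alpha.
Proof.
  intros H Ha. rewrite <- (Rpower_O (Ebig Ba)) by (pose proof (Ebig_gt1 Ba H); lra).
  apply Rpower_lt; [apply Ebig_gt1; auto | lra].
Qed.

Lemma q_gt1 alpha Ba : (1 <= Ba)%nat -> 0 < alpha -> 1 < Rpower (Ebig Ba) (alpha / INR Ba).
Proof.
  intros H Ha. rewrite <- (Rpower_O (Ebig Ba)) by (pose proof (Ebig_gt1 Ba H); lra).
  apply Rpower_lt; [apply Ebig_gt1; auto |].
  unfold Rdiv. apply Rmult_lt_0_compat; [lra | apply Rinv_0_lt_compat, INR_pos; auto].
Qed.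

Lemma alphaB_pos alpha B : (1 <= B)%nat -> 0 < alpha -> 0 < alphaB alpha B.
Proof.
  intros H Ha. unfold alphaB.
  assert (1 < eB B) by (apply (Ebig_gt1 B H)).
  assert (1 < Rpower (eB B) (alpha / INR B)).
  { rewrite <- (Rpower_O (eB B)) by lra. apply Rpower_lt; [lra|].
    unfold Rdiv. apply Rmult_lt_0_compat; [lra | apply Rinv_0_lt_compat, INR_pos; auto]. }
  apply Rmult_lt_0_compat; [apply INR_pos; auto | lra].
Qed.

Lemma beta_eq alpha Ba w j : beta alpha Ba w j = cconst alpha Ba *
  sumn Ba (fun n => w (j - Z.of_nat Ba + 1 + Z.of_nat n)%Z * PP alpha Ba (INR Ba - 1 - INR n)).
Proof.
  unfold beta. f_equal. rewrite Zsum_sumn.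
  replace (Z.to_nat (Z.of_nat Ba - 1 + 1)) with Ba by lia.
  apply sumn_ext. intros k Hk. f_equal; [f_equal; lia|].
  unfold PP. f_equal. f_equal. f_equal. rewrite plus_IZR, <- INR_IZR_INZ. simpl. lra.
Qed.

Lemma geom alpha Ba m : (1 <= Ba)%nat ->
  sumn m (fun n => PP alpha Ba (INR Ba - 1 - INR n)) * (Rpower (Ebig Ba) (alpha / INR Ba) - 1)
  = Rpower (Ebig Ba) alpha - PP alpha Ba (INR Ba - INR m).
Proof.
  intros H. induction m as [|m IH].
  - rewrite sumn_0. simpl. rewrite Rminus_0_r, PP_Ba by auto. ring.
  - rewrite sumn_S, Rmult_plus_distr_r, IH, S_INR.
    replace (INR Ba - INR m) with ((INR Ba - 1 - INR m) + 1) by ring.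
    rewrite PP_plus, PP_1 by auto.
    replace (INR Ba - (INR m + 1)) with (INR Ba - 1 - INR m) by ring. ring.
Qed.

Definition Tn alpha Ba w N := sumn Ba (fun n => w (N - Z.of_nat Ba + 1 + Z.of_nat n)%Z *
  ((Rpower (Ebig Ba) alpha - PP alpha Ba (INR Ba - 1 - INR n)) / (Rpower (Ebig Ba) alpha - 1))).

Lemma Tn_step alpha Ba w N : (1 <= Ba)%nat -> 0 < alpha ->
  Tn alpha Ba w (N + 1)%Z = Tn alpha Ba w N + w (N + 1)%Z - beta alpha Ba w N.
Proof.
  intros H Ha. set (Q := Rpower (Ebig Ba) alpha).
  assert (HQ : 1 < Q) by (apply Q_gt1; auto).
  set (g := fun n : nat => w (N - Z.of_nat Ba + 1 + Z.of_nat n)%Z *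
     ((Q - PP alpha Ba (INR Ba - INR n)) / (Q - 1))).
  unfold Tn. fold Q.
  transitivity (sumn Ba (fun k => g (S k))).
  { apply sumn_ext. intros k Hk. unfold g. f_equal; [f_equal; lia|].
    rewrite S_INR. f_equal. f_equal. f_equal. ring. }
  rewrite sumn_shift. unfold g at 2 3. simpl INR.
  rewrite Rminus_0_r, Rminus_diag, PP_Ba, PP_0 by auto. fold Q.
  replace (N - Z.of_nat Ba + 1 + Z.of_nat Ba)%Z with (N + 1)%Z by lia.
  rewrite beta_eq. unfold cconst. fold Q.
  assert (sumn Ba g = sumn Ba (fun n => w (N - Z.of_nat Ba + 1 + Z.of_nat n)%Z *
    ((Q - PP alpha Ba (INR Ba - 1 - INR n)) / (Q - 1)))
    - ((Rpower (Ebig Ba) (alpha / INR Ba) - 1) / (Q - 1)) *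
      sumn Ba (fun n => w (N - Z.of_nat Ba + 1 + Z.of_nat n)%Z * PP alpha Ba (INR Ba - 1 - INR n))).
  { rewrite <- sumn_scal, <- sumn_minus. apply sumn_ext. intros k Hk. unfold g.
    replace (INR Ba - INR k) with ((INR Ba - 1 - INR k) + 1) by ring.
    rewrite PP_plus, PP_1 by auto. field. lra. }
  rewrite H0. replace ((Q - Q) / (Q - 1)) with 0 by (field; lra).
  replace ((Q - 1) / (Q - 1)) with 1 by (field; lra). ring.
Qed.

Lemma T_formula alpha Ba w (k : nat) : (1 <= Ba)%nat -> 0 < alpha ->
  (forall z : Z, (z <= 0)%Z -> w z = 0) ->
  Zsum 1 (Z.of_nat k) (fun i => w i - beta alpha Ba w (i - 1)%Z) = Tn alpha Ba w (Z.of_nat k).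
Proof.
  intros H Ha Hw. induction k as [|k IH].
  - unfold Zsum. simpl. unfold Tn. symmetry. apply sumn_zero. intros n Hn.
    rewrite Hw by lia. ring.
  - rewrite Zsum_sumn. replace (Z.to_nat (Z.of_nat (S k) - 1 + 1)) with (S k) by lia.
    rewrite sumn_S. rewrite Zsum_sumn in IH.
    replace (Z.to_nat (Z.of_nat k - 1 + 1)) with k in IH by lia.
    rewrite IH. replace (Z.of_nat (S k)) with (Z.of_nat k + 1)%Z by lia.
    rewrite Tn_step by auto.
    replace (1 + Z.of_nat k)%Z with (Z.of_nat k + 1)%Z by lia.
    replace (Z.of_nat k + 1 - 1)%Z with (Z.of_nat k) by lia. ring.
Qed.
Lemma w_mono (I : Z) (w : Z -> R) :
  (forall k : Z, (k <= 0)%Z -> w k = 0) ->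
  (forall k : Z, (1 <= k <= I)%Z -> 0 <= w k) ->
  (forall k : Z, (1 <= k < I)%Z -> w k <= w (k + 1)%Z) ->
  forall m m', (m <= m' <= I)%Z -> w m <= w m'.
Proof.
  intros H0 Hp Hm.
  assert (Hd : forall d : nat, forall m, (m + Z.of_nat d <= I)%Z -> w m <= w (m + Z.of_nat d)%Z).
  { induction d as [|d IH]; intros m Hmd.
    - replace (m + Z.of_nat 0)%Z with m by lia. lra.
    - replace (m + Z.of_nat (S d))%Z with ((m + Z.of_nat d) + 1)%Z by lia.
      assert (H1 := IH m ltac:(lia)).
      destruct (Z_le_gt_dec 1 (m + Z.of_nat d)) as [Hc|Hc].
      + assert (H2 := Hm (m + Z.of_nat d)%Z ltac:(lia)). lra.
      + rewrite (H0 (m + Z.of_nat d)%Z) in H1 by lia.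
        destruct (Z_le_gt_dec (m + Z.of_nat d + 1) 0) as [Hc2|Hc2].
        * rewrite (H0 (m + Z.of_nat d + 1)%Z) by lia. lra.
        * assert (H3 := Hp (m + Z.of_nat d + 1)%Z ltac:(lia)). lra. }
  intros m m' Hmm. assert (H := Hd (Z.to_nat (m' - m)) m ltac:(lia)).
  replace (m + Z.of_nat (Z.to_nat (m' - m)))%Z with m' in H by lia. exact H.
Qed.

Theorem lemmaA6 (alpha : R) (B Ba l : nat) (I : Z) (w : Z -> R) :
  1 <= alpha ->
  (1 <= B)%nat -> (B <= Ba)%nat ->
  (l <= Ba)%nat ->
  (Z.of_nat l <= I)%Z ->
  (forall k : Z, (k <= 0)%Z -> w k = 0) ->
  (forall k : Z, (1 <= k <= I)%Z -> 0 <= w k) ->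
  (forall k : Z, (1 <= k < I)%Z -> w k <= w (k + 1)%Z) ->
  PRDa alpha B Ba l I w <=
    Zsum (I - Z.of_nat Ba + 1) (I - Z.of_nat l) (fun i => phi alpha B Ba l I i * w i)
  + Zsum (I - Z.of_nat l + 1) I (fun i => psi alpha Ba l I i * w i)
  + w (I - Z.of_nat Ba)%Z * Omega alpha B Ba l.
Proof.
  intros Ha HB HBBa Hl HlI Hw0 Hwp Hwm.
  assert (HBa : (1 <= Ba)%nat) by lia. assert (Ha0 : 0 < alpha) by lra.
  set (Q := Rpower (Ebig Ba) alpha).
  set (q := Rpower (Ebig Ba) (alpha / INR Ba)).
  assert (HQ : 1 < Q) by (apply Q_gt1; auto).
  assert (Hq : 1 < q) by (apply q_gt1; auto).
  set (A := / alphaB alpha B).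
  assert (HA : 0 < A) by (apply Rinv_0_lt_compat, alphaB_pos; auto).
  set (c := cconst alpha Ba).
  set (Tlow := sumn l (fun n => w (I - Z.of_nat l - Z.of_nat Ba + 1 + Z.of_nat n)%Z *
      ((Q - PP alpha Ba (INR Ba - 1 - INR n)) / (Q - 1)))).
  set (Thigh := sumn (Ba - l) (fun n => w (I - Z.of_nat Ba + 1 + Z.of_nat n)%Z *
      ((Q - PP alpha Ba (INR Ba - INR l - 1 - INR n)) / (Q - 1)))).
  set (B1 := sumn (Ba - l) (fun n => w (I - Z.of_nat Ba + 1 + Z.of_nat n)%Z *
      PP alpha Ba (INR Ba - 1 - INR n))).
  set (B2 := sumn l (fun n => w (I - Z.of_nat l + 1 + Z.of_nat n)%Z *
      PP alpha Ba (INR l - 1 - INR n))).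
  set (Om := / (Q - 1) * (INR l * Q -
      (Q - Rpower (Ebig Ba) (alpha * (INR Ba - INR l) / INR Ba)) / (q - 1))).
  assert (HT : Zsum 1 (I - Z.of_nat l) (fun i => w i - beta alpha Ba w (i - 1)%Z)
               = Tlow + Thigh).
  { pose proof (T_formula alpha Ba w (Z.to_nat (I - Z.of_nat l)) HBa Ha0 Hw0) as HH.
    rewrite Z2Nat.id in HH by lia. rewrite HH. unfold Tn.
    rewrite (sumn_split Ba l) by lia. fold Q. unfold Tlow, Thigh. f_equal; apply sumn_ext;
      intros k Hk; f_equal; try (f_equal; lia).
    rewrite plus_INR. f_equal. f_equal. f_equal. ring. }
  assert (Hbeta : beta alpha Ba w I = c * (B1 + B2)).
  { rewrite beta_eq. fold c. f_equal. rewrite (sumn_split Ba (Ba - l)) by lia.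
    replace (Ba - (Ba - l))%nat with l by lia. unfold B1, B2.
    f_equal; apply sumn_ext; intros k Hk; f_equal; try (f_equal; lia).
    rewrite plus_INR, minus_INR by lia. f_equal. ring. }
  assert (E1 : Zsum (I - Z.of_nat Ba + 1) (I - Z.of_nat l) (fun i => phi alpha B Ba l I i * w i)
      = (INR Ba - INR l) * c * B1 + A * Thigh).
  { rewrite Zsum_sumn.
    replace (Z.to_nat (I - Z.of_nat l - (I - Z.of_nat Ba + 1) + 1)) with (Ba - l)%nat by lia.
    unfold B1, Thigh. rewrite <- !sumn_scal, <- sumn_plus. apply sumn_ext. intros k Hk.
    unfold phi. fold Q c A.
    replace (I - (I - Z.of_nat Ba + 1 + Z.of_nat k))%Z with (Z.of_nat Ba - 1 - Z.of_nat k)%Z by lia.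
    replace (I - Z.of_nat l - (I - Z.of_nat Ba + 1 + Z.of_nat k))%Z
      with (Z.of_nat Ba - Z.of_nat l - 1 - Z.of_nat k)%Z by lia.
    rewrite !minus_IZR, <- !INR_IZR_INZ. unfold PP. fold Q. ring. }
  assert (E2 : Zsum (I - Z.of_nat l + 1) I (fun i => psi alpha Ba l I i * w i)
      = Zsum (I - Z.of_nat l + 1) I w + (INR Ba - INR l) * c * B2).
  { rewrite !Zsum_sumn.
    replace (Z.to_nat (I - (I - Z.of_nat l + 1) + 1)) with l by lia.
    unfold B2. rewrite <- !sumn_scal, <- sumn_plus. apply sumn_ext. intros k Hk.
    unfold psi. fold c.
    replace (I - (I - Z.of_nat l + 1 + Z.of_nat k))%Z with (Z.of_nat l - 1 - Z.of_nat k)%Z by lia.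
    rewrite !minus_IZR, <- !INR_IZR_INZ. unfold PP. ring. }
  assert (HOm : Omega alpha B Ba l = A * Om).
  { unfold Omega, Om. fold Q q A. ring. }
  assert (E5 : Tlow <= w (I - Z.of_nat Ba)%Z * Om).
  { apply Rle_trans with (sumn l (fun n => w (I - Z.of_nat Ba)%Z *
        ((Q - PP alpha Ba (INR Ba - 1 - INR n)) / (Q - 1)))).
    - apply sumn_le. intros k Hk. apply Rmult_le_compat_r.
      + assert (PP alpha Ba (INR Ba - 1 - INR k) <= Q).
        { unfold Q. rewrite <- PP_Ba by auto. apply PP_mono; auto.
          pose proof (pos_INR k); lra. }
        unfold Rdiv. apply Rmult_le_pos; [lra | left; apply Rinv_0_lt_compat; lra].
      + apply (w_mono I w Hw0 Hwp Hwm). lia.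
    - rewrite sumn_scal. right. f_equal.
      assert (HG := geom alpha Ba l HBa). fold q Q in HG.
      assert (Hs : sumn l (fun n => PP alpha Ba (INR Ba - 1 - INR n)) =
                   (Q - PP alpha Ba (INR Ba - INR l)) / (q - 1)).
      { rewrite <- HG. field. lra. }
      transitivity (sumn l (fun n => / (Q - 1) * Q - / (Q - 1) * PP alpha Ba (INR Ba - 1 - INR n))).
      { apply sumn_ext. intros k Hk. field. lra. }
      rewrite sumn_minus, !sumn_scal, sumn_const. rewrite Hs. unfold Om, PP. field. lra. }
  unfold PRDa. fold A. rewrite HT, Hbeta, E1, E2, HOm.
  assert (A * Tlow <= A * (w (I - Z.of_nat Ba)%Z * Om)) by (apply Rmult_le_compat_l; lra).
  lra.
Qed.
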